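(* Let $G$ be a connected interval graph with a fixed interval representation in which all right endpoints are distinct, and let $V_2$ be the set of vertices with final label 2 in the labeling described in the context. Then for every dominating set $D$ of $G$, $D\leftrightarrow_{|D|+1} V_2$.
   Context: $G$ is given by closed intervals $I_v=[l(v),r(v)]$, $v\in V(G)$, with $uv\in E(G)$ iff $I_u\cap I_v\ne\emptyset$. Labeling procedure, repeated until all vertices are labeled: (1) pick the unlabeled vertex $v_i$ with minimum $r$-value among unlabeled vertices and give it label 1; (2) let $v_j$ be the vertex of $N[v_i]$ with maximum $r$-value (possibly already labeled, possibly $v_j=v_i$) and (re)label $v_j$ with label 2; (3) give label 3 to every still unlabeled vertex of $N(v_j)$. $N[v]$, $N(v)$ are closed and open neighbourhoods. A set $D\subseteq V(G)$ is a dominating set if every vertex is in $D$ or adjacent to a vertex of $D$. Two dominating sets $D,D'$ are adjacent if $|D\triangle D'|=1$. For dominating sets $D_p,D_q$ and an integer $k>0$, write $D_p\leftrightarrow_k D_q$ if there is a sequence $D_0=D_p,\dots,D_\ell=D_q$ ($\ell\ge0$) of dominating sets of $G$ with consecutive sets adjacent and $|D_i|\le k$ for all $i$. *)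

(* Defs.v *)
From HB Require Import structures.
From mathcomp Require Import all_boot all_order.
Set Implicit Arguments. Unset Strict Implicit. Unset Printing Implicit Defensive.
Import Order.TTheory.
Local Open Scope order_scope.

Section IntervalGraph.
Context {d : Order.disp_t} {R : orderType d} {V : finType}.
Variables (l r : V -> R).

(* Closed intervals I_v = [l v, r v] (with l v <= r v assumed in the theorem)
   intersect iff l u <= r v and l v <= r u.  Simple graph: no loops. *)
Definition iadj : rel V := fun u v => (u != v) && (l u <= r v) && (l v <= r u).

Definition Ncl (v : V) : pred V := fun u => (u == v) || iadj v u.

(* Labels: 0 = unlabeled, 1, 2, 3. One round of the labeling procedure. *)
Definition label_step (lab : {ffun V -> nat}) : {ffun V -> nat} :=
  match [pick v | lab v == 0%N] with
  | None => lab
  | Some v0 =>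
    let vi := [arg min_(v < v0 | lab v == 0%N) r v] in
    let vj := [arg max_(u > vi | Ncl vi u) r u] in
    [ffun u => if u == vj then 2%N
               else if u == vi then 1%N
               else if (lab u == 0%N) && iadj vj u then 3%N
               else lab u]
  end.

(* Each round labels at least one new vertex, so #|V| rounds suffice. *)
Definition final_labels : {ffun V -> nat} :=
  iter #|V| label_step [ffun _ => 0%N].

Definition V2 : {set V} := [set v | final_labels v == 2%N].

Definition dominating (D : {set V}) : bool :=
  [forall v, (v \in D) || [exists u in D, iadj u v]].

Definition ds_adjacent (D D' : {set V}) : bool :=
  #|(D :\: D') :|: (D' :\: D)| == 1%N.

Definition reconf (k : nat) (Dp Dq : {set V}) : Prop :=
  exists s : seq {set V},
    [/\ path ds_adjacent Dp s, last Dp s = Dq &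
        all (fun A => dominating A && (#|A| <= k)%N) (Dp :: s)].

Definition connected_graph : Prop := forall u v : V, connect iadj u v.

End IntervalGraph.

(* Main.v *)
Require Import Defs.
From HB Require Import structures.
From mathcomp Require Import all_boot all_order.
Import Order.TTheory.

Section Pf.
Variables (d : Order.disp_t) (R : orderType d) (V : finType) (l r : V -> R).
Hypothesis hlr : forall v, (l v <= r v)%O.

Local Notation adj := (iadj l r).
Local Notation N := (Ncl l r).

Lemma adj_sym u v : adj u v = adj v u.
Proof. by rewrite /iadj eq_sym; case: (v == u); case: (l u <= r v)%O; case: (l v <= r u)%O. Qed.

Lemma N_sym u v : N u v = N v u.
Proof. by rewrite /Ncl eq_sym adj_sym. Qed.

Lemma domP (A : {set V}) : reflect (forall x, exists2 y, y \in A & N y x) (dominating l r A).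
Proof.
apply: (iffP forallP) => H x.
  case/orP: (H x) => [xA|/existsP[y /andP[yA hy]]]; first by exists x; rewrite // /Ncl eqxx.
  by exists y; rewrite // /Ncl hy orbT.
case: (H x) => y yA; rewrite /Ncl => /orP[/eqP->|hy]; first by rewrite yA.
by apply/orP; right; apply/existsP; exists y; rewrite yA.
Qed.

Lemma dom_sup (A B : {set V}) : A \subset B -> dominating l r A -> dominating l r B.
Proof.
move=> sAB /domP H; apply/domP => x; case: (H x) => y yA hy; exists y => //.
exact: (subsetP sAB).
Qed.

Lemma adj_add (A : {set V}) x : x \notin A -> ds_adjacent A (x |: A).
Proof.
move=> xA; rewrite /ds_adjacent.
have -> : (A :\: (x |: A)) :|: ((x |: A) :\: A) = [set x].
  apply/setP => y; rewrite !inE; case: (y =P x) => [->|]; first by rewrite (negbTE xA).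
  by case: (y \in A).
by rewrite cards1.
Qed.

Lemma adj_del (A : {set V}) x : x \in A -> ds_adjacent A (A :\ x).
Proof.
move=> xA; rewrite /ds_adjacent.
have -> : (A :\: (A :\ x)) :|: ((A :\ x) :\: A) = [set x].
  apply/setP => y; rewrite !inE; case: (y =P x) => [->|]; first by rewrite xA.
  by case: (y \in A).
by rewrite cards1.
Qed.

Lemma reconf_refl k (A : {set V}) : dominating l r A -> (#|A| <= k)%N -> reconf l r k A A.
Proof. by move=> dA cA; exists [::]; split => //=; rewrite dA cA. Qed.

Lemma reconf_snoc k (A B C : {set V}) : reconf l r k A B -> ds_adjacent B C ->
  dominating l r C -> (#|C| <= k)%N -> reconf l r k A C.
Proof.
case=> s [p e a] hBC dC cC; exists (rcons s C); split.
- by rewrite rcons_path p e.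
- by rewrite last_rcons.
- by rewrite -rcons_cons all_rcons dC cC.
Qed.

Arguments reconf_snoc {k A B C}.
Arguments adj_add {A x}.
Arguments adj_del {A x}.

Definition Inv (lab : {ffun V -> nat}) :=
  (forall x, lab x != 0%N -> exists2 z, lab z == 2%N & N z x) /\
  (forall z x, lab z == 2%N -> N z x -> lab x != 0%N).

Definition Zs (lab : {ffun V -> nat}) := [set v | lab v == 0%N].

Lemma zeros_step lab : (#|Zs (label_step l r lab)| <= (#|Zs lab|).-1)%N.
Proof.
rewrite /label_step; case: pickP => [v0 v00|H]; last first.
  have -> : Zs lab = set0 by apply/setP => x; rewrite !inE H.
  by rewrite cards0.
case: arg_minP => // vi vi0 _.
set w := [arg max_(u > vi | N vi u) r u]%O.
set lab' := [ffun _ => _].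
have sub : Zs lab' \subset Zs lab :\ vi.
  apply/subsetP => x; rewrite !inE /lab' ffunE.
  case: (x == w) => //; case: (x =P vi) => // _.
  by case: (lab x =P 0%N) => [->|nz] //=; case: (adj w x) => //= /eqP.
rewrite (leq_trans (subset_leq_card sub)) //.
by rewrite (cardsD1 vi (Zs lab)) inE vi0.
Qed.


Lemma step_ok (D : {set V}) k lab (Dc : {set V}) : Inv lab -> dominating l r Dc ->
  [set v | lab v == 2%N] \subset Dc -> (#|Dc| <= k)%N -> reconf l r k.+1 D Dc ->
  Inv (label_step l r lab) /\ exists Dc' : {set V},
    [/\ dominating l r Dc', [set v | label_step l r lab v == 2%N] \subset Dc',
        (#|Dc'| <= k)%N & reconf l r k.+1 D Dc'].
Proof.
move=> [I1 I2] dDc sW cDc rDc.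
rewrite /label_step; case: pickP => [v0 v00|H]; last by split=> //; exists Dc.
case: arg_minP => // vi vi0 himin.
case: arg_maxP => [|w hw hwmax]; first by rewrite /Ncl eqxx.
set lab' := [ffun _ => _].
have lab'E x : lab' x = if x == w then 2%N else if x == vi then 1%N
   else if (lab x == 0%N) && adj w x then 3%N else lab x by rewrite ffunE.
have two_pres z : lab z == 2%N -> lab' z == 2%N.
  move=> hz; rewrite lab'E; case: (z =P w) => // _; case: (z =P vi) => [e|_].
    by move: vi0; rewrite -e (eqP hz).
  by rewrite (eqP hz).
have two_back z : lab' z == 2%N -> (z == w) || (lab z == 2%N).
  rewrite lab'E; case: (z =P w) => // _; case: (z =P vi) => // _.
  by case: ((lab z == 0%N) && adj w z).
have zero_back x : lab' x == 0%N -> [&& lab x == 0%N, x != w, x != vi & ~~ adj w x].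
  rewrite lab'E; case: (x =P w) => // _; case: (x =P vi) => // _.
  by case: (lab x =P 0%N) => [->|nz] //=; case: (adj w x) => //= /eqP.
have Nwvi : N w vi by rewrite N_sym.
have Inv' : Inv lab'.
  split.
    move=> x nx; case: (boolP (lab x == 0%N)) => [x0|x0].
      exists w; first by rewrite lab'E eqxx.
      move: nx; rewrite lab'E /Ncl; case: (x =P w) => // xw; case: (x =P vi) => [e|_] //.
        by move=> _; move: Nwvi; rewrite /Ncl -e (introF eqP xw).
      by rewrite x0 /= (eqP x0); case: (adj w x).
    by case: (I1 x x0) => z hz Nz; exists z => //; apply: two_pres.
  move=> z x /two_back /orP[/eqP->|hz] Nzx; apply/negP => /zero_back /and4P[x0 xw xvi nadj].
    by move: Nzx; rewrite /Ncl (negbTE xw) (negbTE nadj).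
  by move: (I2 z x hz Nzx); rewrite x0.
split => //.
have W' : forall z, lab' z == 2%N -> (z == w) || (z \in Dc).
  by move=> z /two_back /orP[->//|hz]; rewrite (subsetP sW) ?orbT // inE.
case: (boolP (w \in Dc)) => [wD|wD].
  exists Dc; split => //; apply/subsetP => z; rewrite inE => /W' /orP[/eqP->|] //.
move/domP: (dDc) => /(_ vi) [u uD Nuvi].
have Nviu : N vi u by rewrite N_sym.
have u2 : lab u != 2%N.
  by apply/negP => hu; move: (I2 u vi hu Nuvi); rewrite vi0.
have uw : u != w by apply/negP => /eqP e; move: wD; rewrite -e uD.
have rur : (r u <= r w)%O := hwmax u Nviu.
have lwr : (l w <= r vi)%O.
  move: hw; rewrite /Ncl => /orP[/eqP->|]; first exact: hlr.
  by case/andP.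
set Dc1 := w |: Dc.
have dDc1 : dominating l r Dc1 by apply: dom_sup dDc; apply: subsetUr.
have cDc1 : #|Dc1| = #|Dc|.+1 by rewrite cardsU1 wD.
have rDc1 : reconf l r k.+1 D Dc1.
  by apply: reconf_snoc rDc (adj_add wD) dDc1 _; rewrite cDc1.
have uDc1 : u \in Dc1 by rewrite !inE uD orbT.
have dDc' : dominating l r (Dc1 :\ u).
  apply/domP => x; move/domP: dDc => /(_ x) [y yD Nyx].
  case: (y =P u) => [e|ne]; last by exists y; rewrite // !inE yD orbT andbT; apply/eqP.
  subst y; case: (boolP (lab x == 0%N)) => [x0|x0]; last first.
    case: (I1 x x0) => z hz Nz; exists z => //.
    rewrite !inE (subsetP sW) ?orbT ?andbT ?inE //.
    by apply/negP => /eqP e; move: u2; rewrite -e hz.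
  exists w; first by rewrite !inE eqxx eq_sym uw.
  have rvx : (r vi <= r x)%O := himin x x0.
  have lxu : (l x <= r u)%O.
    move: Nyx; rewrite /Ncl => /orP[/eqP->|]; first exact: hlr.
    by case/andP.
  rewrite /Ncl; case: (x =P w) => //= /eqP; rewrite eq_sym => xw.
  rewrite /iadj xw /=; apply/andP; split.
    exact: (le_trans lwr rvx).
  exact: (le_trans lxu rur).
have cDc' : (#|Dc1 :\ u| <= k)%N.
  by move: (cardsD1 u Dc1); rewrite uDc1 cDc1 add1n => -[<-].
exists (Dc1 :\ u); split => //.
- apply/subsetP => z; rewrite inE => /two_back /orP[/eqP->|hz].
    by rewrite !inE eqxx eq_sym uw.
  rewrite !inE (subsetP sW) ?orbT ?andbT ?inE //; apply/negP => /eqP e.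
  by move: u2; rewrite -e hz.
- exact: (reconf_snoc rDc1 (adj_del uDc1) dDc' (leqW cDc')).
Qed.


Lemma shrink k (D : {set V}) n (A : {set V}) : dominating l r (V2 l r) ->
  #|A :\: V2 l r| = n -> V2 l r \subset A -> (#|A| <= k)%N ->
  reconf l r k D A -> reconf l r k D (V2 l r).
Proof.
move=> dV; elim: n A => [|n IH] A hn sVA cA rA.
  suff -> : V2 l r = A by [].
  apply/eqP; rewrite eqEsubset sVA /=; apply/subsetP => x xA.
  apply/negPn/negP => xV; move/eqP: hn; rewrite cards_eq0 => /eqP/setP/(_ x).
  by rewrite in_setD in_set0 xA xV.
have : (0 < #|A :\: V2 l r|)%N by rewrite hn.
rewrite card_gt0 => /set0Pn [u]; rewrite in_setD => /andP[uV uA].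
have sVA' : V2 l r \subset A :\ u.
  apply/subsetP => x xV; rewrite in_setD1 (subsetP sVA) // andbT.
  by apply/negP => /eqP e; move: uV; rewrite -e xV.
have dA' : dominating l r (A :\ u) by apply: dom_sup dV.
have cA' : (#|A :\ u| <= k)%N.
  by apply: leq_trans cA; apply: subset_leq_card; apply: subsetDl.
apply: (IH (A :\ u)) => //.
- move: hn; rewrite (cardsD1 u (A :\: V2 l r)) in_setD uV uA add1n => -[<-].
  have -> : A :\ u :\: V2 l r = (A :\: V2 l r) :\ u.
    by apply/setP => x; rewrite !in_setD1 !in_setD in_set1 andbCA.
  by [].
- exact: (reconf_snoc rA (adj_del uA) dA' cA').
Qed.

Lemma iter_ok (D : {set V}) n : dominating l r D ->
  let lab := iter n (label_step l r) [ffun _ => 0%N] in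
  Inv lab /\ exists Dc : {set V},
    [/\ dominating l r Dc, [set v | lab v == 2%N] \subset Dc,
        (#|Dc| <= #|D|)%N & reconf l r #|D|.+1 D Dc].
Proof.
move=> dD; elim: n => [|n [Iv [Dc [h1 h2 h3 h4]]]] /=.
  split.
    by split=> [x|z x]; rewrite ffunE ?eqxx.
  exists D; split => //; last by apply: reconf_refl.
  by apply/subsetP => x; rewrite !inE ffunE.
exact: (@step_ok D #|D| _ Dc Iv h1 h2 h3 h4).
Qed.

Lemma zeros_iter n : (#|Zs (iter n (label_step l r) [ffun _ => 0%N])| <= #|V| - n)%N.
Proof.
elim: n => [|n IH] /=; first by rewrite subn0 max_card.
apply: leq_trans (zeros_step _) _.
by rewrite subnS -!subn1 leq_sub2r.
Qed.

End Pf.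

Theorem lemma13 (d : Order.disp_t) (R : orderType d) (V : finType)
    (l r : V -> R)
    (hlr : forall v, (l v <= r v)%O)
    (hconn : connected_graph l r)
    (hrinj : injective r)
    (D : {set V}) :
  dominating l r D -> reconf l r #|D|.+1 D (V2 l r).
Proof.
move=> dD.
have [[I1 I2] [Dc [h1 h2 h3 h4]]] := @iter_ok d R V l r hlr D #|V| dD.
have Z0 : forall x, final_labels l r x != 0%N.
  move=> x; have := @zeros_iter d R V l r #|V|; rewrite subnn leqn0 cards_eq0.
  move=> /eqP /setP /(_ x); rewrite !inE.
  by rewrite /final_labels => ->.
have dV : dominating l r (V2 l r).
  apply/domP => x; case: (I1 x (Z0 x)) => z hz Nz; exists z => //.
  by rewrite inE.
exact: (@shrink d R V l r _ D _ Dc dV erefl h2 (leqW h3) h4).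
Qed.
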